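(* Let $0<\varepsilon\le1$ and let $\vec U\in V_{\mathrm{per}}(\Omega^\varepsilon)$ and $P\in L^2(\Omega^\varepsilon)$ satisfy, for constants $C_1,C_2$ independent of $\varepsilon$, (i) $\|\operatorname{div}\vec U\|_{L^2(\Omega^\varepsilon)}\le C_1\varepsilon^{5/2}$, and (ii) for all $\vec\varphi\in V_{\mathrm{per}}(\Omega^\varepsilon)$: $$\Big|\int_{\Omega^\varepsilon}\nabla\vec U:\nabla\vec\varphi-\int_{\Omega^\varepsilon}P\,\operatorname{div}\vec\varphi\Big|\le C_2\varepsilon^{3/2}\big(\|\nabla\vec\varphi\|_{L^2(\Omega^\varepsilon)^4}+\|\vec\varphi\|_{H^1(\Omega_{\mathrm{ff}})^2}\big).$$ Then there is a constant $C$ (depending only on $C_1,C_2$) such that $$\|\nabla\vec U\|^2_{L^2(\Omega^\varepsilon)^4}\le C\varepsilon^{5/2}\|P\|_{L^2(\Omega^\varepsilon)}+C\varepsilon^{3/2}\big(\|\nabla\vec U\|_{L^2(\Omega^\varepsilon_{\mathrm{pm}})^4}+\|\vec U\|_{H^1(\Omega_{\mathrm{ff}})^2}\big).$$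
   Context: Two-dimensional setting with scale parameter $\varepsilon=\ell/L$. The pore-scale flow domain is $\Omega^\varepsilon=\Omega_{\mathrm{ff}}\cup\Sigma\cup\Omega^\varepsilon_{\mathrm{pm}}$, where $\Omega_{\mathrm{ff}}=(0,L)\times(0,h)$ is the free-flow region, $\Sigma=(0,L)\times\{0\}$ the interface, and $\Omega^\varepsilon_{\mathrm{pm}}$ is the fluid part of the porous region $(0,L)\times(-H,0)$, obtained by periodic repetition of $\varepsilon$-scaled unit cells $\varepsilon Y$ containing a solid inclusion $\varepsilon Y_s$ strictly inside each cell. The test space is $V_{\mathrm{per}}(\Omega^\varepsilon)=\{\vec\phi\in H^1(\Omega^\varepsilon)^2:\ \vec\phi=\vec0$ on the boundaries of the solid inclusions, $\vec\phi=\vec 0$ on $\{x_2=h\}$, $\phi_2=0$ on $\{x_2=-H\}$, $\vec\phi$ is $L$-periodic in $x_1\}$. In the paper, $(\vec U,P)$ is the pair $(\vec U^{6,\varepsilon},P^{6,\varepsilon})$ of velocity and pressure errors between the pore-scale Stokes solution and the constructed multiscale approximation, for which (i) and (ii) are the conclusions of Corollaries 3.3 and 3.4. *)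

(* Defs.v *)
From HB Require Import structures.
From mathcomp Require Import all_boot all_order all_algebra.
From mathcomp Require Import all_classical all_reals all_analysis.
Set Implicit Arguments. Unset Strict Implicit. Unset Printing Implicit Defensive.
Import Order.TTheory GRing.Theory Num.Theory numFieldNormedType.Exports.
Local Open Scope classical_set_scope.
Local Open Scope ring_scope.

Section Defs.
Variable R : realType.

Definition pt := (R * R)%type.

Definition leb2 := ((@lebesgue_measure R) \x (@lebesgue_measure R))%E.

Definition rint (D : set pt) (f : pt -> R) : R :=
  fine (\int[leb2]_(x in D) (f x)%:E)%E.

Definition L2 (D : set pt) (f : pt -> R) : Prop :=
  measurable_fun D f /\ leb2.-integrable D (fun x => (f x ^+ 2)%:E).

Definition L2norm (D : set pt) (f : pt -> R) : R :=
  Num.sqrt (rint D (fun x => f x ^+ 2)).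

Definition ev (j : 'I_2) : pt := if j == ord0 then (1, 0) else (0, 1).
Definition i1 : 'I_2 := @Ordinal 2 1 isT.

Definition iterD (vs : seq pt) (f : pt -> R) : pt -> R :=
  foldr (fun v g => 'D_v g) f vs.
Definition smooth (f : pt -> R) : Prop :=
  forall vs : seq pt, continuous (iterD vs f) /\
    forall (x v : pt), derivable (iterD vs f) x v.

Definition test_fun (O : set pt) (psi : pt -> R) : Prop :=
  smooth psi /\ exists K : set pt, [/\ compact K, K `<=` O &
    forall x, ~ K x -> psi x = 0].

Definition weak_grad (O : set pt) (u : pt -> R) (g : 'I_2 -> pt -> R) : Prop :=
  forall psi, test_fun O psi -> forall j : 'I_2,
    (\int[leb2]_(x in O) (u x * 'D_(ev j) psi x)%:E
     = - \int[leb2]_(x in O) (g j x * psi x)%:E)%E.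

Definition H1 (O : set pt) (u : pt -> R) (g : 'I_2 -> pt -> R) : Prop :=
  [/\ L2 O u, forall j, L2 O (g j) & weak_grad O u g].

(* vector fields U : 'I_2 -> pt -> R with gradients DU i j = d_j U_i *)
Definition H1v (O : set pt) (U : 'I_2 -> pt -> R)
  (DU : 'I_2 -> 'I_2 -> pt -> R) : Prop := forall i, H1 O (U i) (DU i).

Definition grad_norm (D : set pt) (DU : 'I_2 -> 'I_2 -> pt -> R) : R :=
  Num.sqrt (rint D (fun x => \sum_(i < 2) \sum_(j < 2) DU i j x ^+ 2)).

Definition H1v_norm (D : set pt) (U : 'I_2 -> pt -> R)
  (DU : 'I_2 -> 'I_2 -> pt -> R) : R :=
  Num.sqrt (rint D (fun x => \sum_(i < 2) U i x ^+ 2 +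
                             \sum_(i < 2) \sum_(j < 2) DU i j x ^+ 2)).

Definition divg (DU : 'I_2 -> 'I_2 -> pt -> R) (x : pt) : R :=
  DU ord0 ord0 x + DU i1 i1 x.

Definition gradprod (DU DV : 'I_2 -> 'I_2 -> pt -> R) (x : pt) : R :=
  \sum_(i < 2) \sum_(j < 2) DU i j x * DV i j x.

Definition frac (r : R) : R := r - (Num.floor r)%:~R.

(* position inside the unit cell Y = [0,1)^2 of the eps-cell containing x *)
Definition cellpos (eps : R) (x : pt) : pt := (frac (x.1 / eps), frac (x.2 / eps)).

Definition Omega_ff (L h : R) : set pt :=
  [set x | 0 < x.1 < L /\ 0 < x.2 < h].
Definition Sigma (L : R) : set pt := [set x | 0 < x.1 < L /\ x.2 = 0].
(* fluid part of the porous region (0,L) x (-H,0) *)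
Definition Omega_pm (L H eps : R) (Ys : set pt) : set pt :=
  [set x | 0 < x.1 < L /\ - H < x.2 < 0 /\ ~ Ys (cellpos eps x)].
Definition Omega_eps (L h H eps : R) (Ys : set pt) : set pt :=
  Omega_ff L h `|` Sigma L `|` Omega_pm L H eps Ys.

Definition Vsmooth (L h H eps : R) (Ys : set pt) (phi : 'I_2 -> pt -> R) : Prop :=
  [/\ forall i, smooth (phi i),
      forall i x, phi i (x.1 + L, x.2) = phi i x,
      forall i x1, phi i (x1, h) = 0,
      forall x1, phi i1 (x1, - H) = 0
    & forall i x, 0 <= x.1 <= L -> - H <= x.2 <= 0 ->
        (Ys `\` interior Ys) (cellpos eps x) -> phi i x = 0]. (* phi = 0 on inclusion boundaries *)

(* V_per(Omega^eps): H^1 closure of the smooth admissible fields *)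
Definition Vper (L h H eps : R) (Ys : set pt) (U : 'I_2 -> pt -> R)
    (DU : 'I_2 -> 'I_2 -> pt -> R) : Prop :=
  H1v (Omega_eps L h H eps Ys) U DU /\
  exists phin : nat -> 'I_2 -> pt -> R,
    (forall n, Vsmooth L h H eps Ys (phin n)) /\
    (fun n => H1v_norm (Omega_eps L h H eps Ys)
                (fun i x => phin n i x - U i x)
                (fun i j x => 'D_(ev j) (phin n i) x - DU i j x)) @ \oo --> (0 : R).

End Defs.

(* Main.v *)
Require Import Defs.
From HB Require Import structures.
From mathcomp Require Import all_boot all_order all_algebra.
From mathcomp Require Import all_classical all_reals all_analysis.
From mathcomp Require Import lra ring.
Import Order.TTheory GRing.Theory Num.Theory numFieldNormedType.Exports.
Local Open Scope classical_set_scope.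
Local Open Scope ring_scope.
Set Implicit Arguments. Unset Strict Implicit. Unset Printing Implicit Defensive.
Section Meas.
Variable R : realType.
Implicit Types (O : set (pt R)).

Definition box (q : (rat * rat) * (rat * rat)) : set (pt R) :=
  `](ratr q.1.1 : R), ratr q.1.2[ `*` `](ratr q.2.1 : R), ratr q.2.2[.

Lemma open_meas O : open O -> measurable O.
Proof.
move=> oO.
have -> : O = \bigcup_(q : (rat * rat) * (rat * rat))
    (if `[< box q `<=` O >] then box q else set0).
  apply/seteqP; split; last first.
    by move=> x [q _]; case: asboolP => // H /H.
  move=> x Ox.
  have /nbhs_ballP [e /= e0 He] := oO x Ox.
  have [a ha] : exists a : rat, ratr a \in `](x.1 - e), x.1[.
    by apply: rat_in_itvoo; rewrite ltrBlDr ltrDl.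
  have [b hb] : exists a : rat, ratr a \in `]x.1, (x.1 + e)[.
    by apply: rat_in_itvoo; rewrite ltrDl.
  have [c hc] : exists a : rat, ratr a \in `](x.2 - e), x.2[.
    by apply: rat_in_itvoo; rewrite ltrBlDr ltrDl.
  have [d hd] : exists a : rat, ratr a \in `]x.2, (x.2 + e)[.
    by apply: rat_in_itvoo; rewrite ltrDl.
  move: ha hb hc hd; rewrite !in_itv /= => /andP[a1 a2] /andP[b1 b2] /andP[c1 c2] /andP[d1 d2].
  exists ((a, b), (c, d)) => //.
  case: asboolP => [_|]; last first.
    case; move=> y [] /=; rewrite !in_itv /= => /andP[y1 y2] /andP[y3 y4].
    apply: He; split => /=; rewrite /ball /=.
      rewrite ltr_norml; apply/andP; split; rewrite ?ltrBrDl ?opprB ?ltrBlDr; lra.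
    rewrite ltr_norml; apply/andP; split; rewrite ?ltrBrDl ?opprB ?ltrBlDr; lra.
  by split; rewrite /= in_itv /= ?a2 ?b1 ?c2 ?d1.
apply: countable_bigcupT_measurable; first exact: countableP.
move=> q; case: asboolP => _ //.
by apply: measurableX; apply: measurable_itv.
Qed.
Lemma floor_meas : measurable_fun [set: R] (fun r : R => (Num.floor r)%:~R : R).
Proof.
apply: measurable_realfun.nondecreasing_measurable => // x y xy.
by rewrite ler_int le_floor.
Qed.

Lemma frac_meas (eps : R) : measurable_fun [set: R] (fun r => Defs.frac (r / eps)).
Proof.
rewrite /Defs.frac.
apply: measurable_realfun.measurable_funB.
  exact: measurable_realfun.measurable_funM.
apply: (measurableT_comp floor_meas).
exact: measurable_realfun.measurable_funM.
Qed.

Lemma cellpos_meas (eps : R) : measurable_fun [set: pt R] (cellpos eps).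
Proof.
apply: measurable_fun_pair.
  exact: (measurableT_comp (frac_meas eps) measurable_fst).
exact: (measurableT_comp (frac_meas eps) measurable_snd).
Qed.

Lemma pm_meas (L H eps : R) (Ys : set (pt R)) : closed Ys ->
  measurable (Omega_pm L H eps Ys).
Proof.
move=> cY.
have -> : Omega_pm L H eps Ys = (`]0, L[ `*` `](- H), 0[) `&` (cellpos eps @^-1` (~` Ys)).
  apply/seteqP; split => x /=; rewrite !in_itv /=.
    by move=> [a [b c]]; split => //; split.
  by move=> [[a b] c]; split => //; split.
apply: measurableI.
  by apply: measurableX; apply: measurable_itv.
rewrite -[X in measurable X]setTI.
apply: (cellpos_meas eps) => //.
apply: open_meas; exact: closed_openC.
Qed.

Lemma ff_meas (L h : R) : measurable (Omega_ff L h).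
Proof.
have -> : Omega_ff L h = `]0, L[ `*` `]0, h[.
  apply/seteqP; split => x /=; rewrite !in_itv //=.
by apply: measurableX; apply: measurable_itv.
Qed.

Lemma sigma_meas (L : R) : measurable (Sigma L : set (pt R)).
Proof.
have -> : Sigma L = `]0, L[ `*` [set (0:R)].
  apply/seteqP; split => x /=; rewrite !in_itv //=.
by apply: measurableX => //; apply: measurable_itv.
Qed.

Lemma sigma_null (L : R) : leb2 (Sigma L : set (pt R)) = 0%E.
Proof.
apply/eqP; rewrite eq_le measure_ge0 andbT.
apply: (@le_trans _ _ (leb2 ([set: R] `*` [set (0:R)]))).
  apply: le_measure; rewrite ?inE.
  - exact: sigma_meas.
  - by apply: measurableX.
  - by move=> x [_ /= ->].
rewrite /leb2 product_measure1E //.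
rewrite (_ : (_ [set 0%R]) = 0%E) ?mule0 //; exact: lebesgue_measure_set1.
Qed.
End Meas.

Section Int.
Variable R : realType.
Implicit Types (D : set (pt R)) (f g : pt R -> R).

Definition mu : {measure set _ -> \bar R} :=
  (@lebesgue_measure R \x @lebesgue_measure R)%E.
Lemma leb2E : @leb2 R = mu. Proof. by []. Qed.
Definition Int D f := mu.-integrable D (EFin \o f).

Lemma rintE D f : rint D f = Rintegral mu D f.
Proof. by []. Qed.

Lemma absprod (a b : R) : `|a * b| <= a ^+ 2 + b ^+ 2.
Proof.
rewrite normrM -(real_normK (num_real a)) -(real_normK (num_real b)).
have := normr_ge0 a; have := normr_ge0 b; nra.
Qed.

Lemma L2sq D f : L2 D f -> Int D (fun x => f x ^+ 2).
Proof. by case. Qed.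

Lemma IntD D f g : measurable D -> Int D f -> Int D g -> Int D (fun x => f x + g x).
Proof.
move=> mD If Ig; apply: (@eq_integrable _ _ _ mu D mD (fun x => (f x)%:E + (g x)%:E)%E).
  by move=> x.
exact: integrableD.
Qed.

Lemma IntZ D f k : measurable D -> Int D f -> Int D (fun x => k * f x).
Proof.
move=> mD If; apply: (@eq_integrable _ _ _ mu D mD (fun x => k%:E * (EFin \o f) x)%E).
  by move=> x.
exact: integrableZl.
Qed.

Lemma L2mul D f g : measurable D -> L2 D f -> L2 D g -> Int D (fun x => f x * g x).
Proof.
move=> mD Lf Lg; have If := L2sq Lf; have Ig := L2sq Lg; case: Lf => mf _; case: Lg => mg _.
apply: (@le_integrable _ _ _ mu D mD _ (EFin \o (fun x => f x ^+ 2 + g x ^+ 2))); last exact: (IntD mD If Ig).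
  by apply/measurable_realfun.measurable_EFinP; exact: measurable_realfun.measurable_funM.
move=> x _ /=; rewrite lee_fin.
rewrite (ger0_norm (addr_ge0 (sqr_ge0 _) (sqr_ge0 _))).
exact: absprod.
Qed.

Lemma L2add D f g : measurable D -> L2 D f -> L2 D g -> L2 D (fun x => f x + g x).
Proof.
move=> mD Lf Lg; have If := L2sq Lf; have Ig := L2sq Lg; case: Lf => mf _; case: Lg => mg _; split.
  exact: measurable_realfun.measurable_funD.
have I2 := IntD mD If Ig.
apply: (@le_integrable _ _ _ mu D mD _ (EFin \o (fun x => (f x ^+ 2 + g x ^+ 2) + (f x ^+ 2 + g x ^+ 2)))); last exact: (IntD mD I2 I2).
  apply/measurable_realfun.measurable_EFinP.
  apply: measurable_realfun.measurable_funM;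
  exact: measurable_realfun.measurable_funD.
move=> x _ /=; rewrite lee_fin ger0_norm ?sqr_ge0 //.
rewrite ger0_norm; last by rewrite !addr_ge0 ?sqr_ge0.
have := sqr_ge0 (f x - g x); nra.
Qed.

Lemma CS D f g : measurable D -> L2 D f -> L2 D g ->
  `|rint D (fun x => f x * g x)| <= L2norm D f * L2norm D g.
Proof.
move=> mD Lf Lg.
have If := L2sq Lf; have Ig := L2sq Lg; have Ifg := L2mul mD Lf Lg.
set A := rint D (fun x => f x ^+ 2).
set B := rint D (fun x => g x ^+ 2).
set C := rint D (fun x => f x * g x).
have A0 : 0 <= A by apply: Rintegral_ge0 => x _; exact: sqr_ge0.
have B0 : 0 <= B by apply: Rintegral_ge0 => x _; exact: sqr_ge0.
have key : forall s, 0 <= s ^+ 2 * A + (2 * s * C + B).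
  move=> s.
  have -> : s ^+ 2 * A + (2 * s * C + B) =
      rint D (fun x => (s * f x + g x) ^+ 2).
    transitivity (rint D (fun x => s ^+ 2 * f x ^+ 2 + (2 * s * (f x * g x) + g x ^+ 2))); last first.
      by rewrite !rintE; apply: eq_Rintegral => x _; ring.
    rewrite rintE RintegralD //; last by apply: IntD => //; exact: IntZ.
      rewrite RintegralD //; last exact: IntZ.
      by rewrite !RintegralZl.
    exact: IntZ.
  by apply: Rintegral_ge0 => x _; exact: sqr_ge0.
have CAB : C ^+ 2 <= A * B.
  have [A00|Apos] := eqVneq A 0.
    have [C00|Cn0] := eqVneq C 0; first by rewrite C00 A00 expr0n /= mul0r.
    have := key (- (B + 1) / (2 * C)).
    rewrite A00 mulr0 add0r.
    have -> : 2 * (- (B + 1) / (2 * C)) * C = - (B + 1).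
      by field; rewrite Cn0.
    lra.
  have Ap : 0 < A by rewrite lt_neqAle eq_sym Apos A0.
  have := key (- C / A).
  have -> : (- C / A) ^+ 2 * A + (2 * (- C / A) * C + B) = B - C ^+ 2 / A.
    by field; rewrite Apos.
  rewrite subr_ge0 ler_pdivrMr // => h; by rewrite mulrC.
rewrite /L2norm -/A -/B -sqrtrM // -sqrtr_sqr ler_sqrt //.
exact: mulr_ge0.
Qed.
End Int.


Section Main.
Variable R : realType.

Definition G4 (DU : 'I_2 -> 'I_2 -> pt R -> R) x :=
  (DU ord0 ord0 x ^+ 2 + DU ord0 i1 x ^+ 2) + (DU i1 ord0 x ^+ 2 + DU i1 i1 x ^+ 2).

Lemma Gsum (DU : 'I_2 -> 'I_2 -> pt R -> R) x :
  \sum_(i < 2) \sum_(j < 2) DU i j x ^+ 2 = G4 DU x.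
Proof.
rewrite !big_ord_recl !big_ord0 !addr0 /=.
by have -> : lift ord0 ord0 = i1 :> 'I_2 by apply/val_inj.
Qed.

Lemma Usum (U : 'I_2 -> pt R -> R) x :
  \sum_(i < 2) U i x ^+ 2 = U ord0 x ^+ 2 + U i1 x ^+ 2.
Proof.
rewrite !big_ord_recl !big_ord0 !addr0 /=.
by have -> : lift ord0 ord0 = i1 :> 'I_2 by apply/val_inj.
Qed.

Lemma G4int D DU : measurable D -> (forall i j, L2 D (DU i j)) -> Int D (G4 DU).
Proof.
move=> mD h.
apply: IntD => //; apply: IntD => //; exact: L2sq.
Qed.

Lemma sqrtD (x y : R) : 0 <= x -> 0 <= y -> Num.sqrt (x + y) <= Num.sqrt x + Num.sqrt y.
Proof.
move=> x0 y0.
rewrite -[X in _ <= X]ger0_norm ?addr_ge0 ?sqrtr_ge0 //.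
rewrite -sqrtr_sqr ler_sqrt ?sqr_ge0 //.
rewrite sqrrD !sqr_sqrtr //.
have := mulr_ge0 (sqrtr_ge0 x) (sqrtr_ge0 y); lra.
Qed.
End Main.

Unset Implicit Arguments.

Theorem corollary3p5 (R : realType) (C1 C2 : R) :
  exists C : R,
  forall (L h H eps : R) (Ys : set (pt R)) (N M : nat),
    0 < L -> 0 < h -> 0 < H -> 0 < eps <= 1 ->
    L = N%:R * eps -> H = M%:R * eps ->
    closed Ys -> Ys !=set0 ->
    (exists d : R, 0 < d /\
       Ys `<=` [set y | d <= y.1 <= 1 - d /\ d <= y.2 <= 1 - d]) ->
  forall (U : 'I_2 -> pt R -> R) (DU : 'I_2 -> 'I_2 -> pt R -> R) (P : pt R -> R),
    Vper L h H eps Ys U DU ->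
    L2 (Omega_eps L h H eps Ys) P ->
    L2norm (Omega_eps L h H eps Ys) (divg DU) <= C1 * eps `^ (5 / 2) ->
    (forall (phi : 'I_2 -> pt R -> R) (Dphi : 'I_2 -> 'I_2 -> pt R -> R),
        Vper L h H eps Ys phi Dphi ->
        `| rint (Omega_eps L h H eps Ys) (gradprod DU Dphi)
           - rint (Omega_eps L h H eps Ys) (fun x => P x * divg Dphi x) |
        <= C2 * eps `^ (3 / 2) *
           (grad_norm (Omega_eps L h H eps Ys) Dphi + H1v_norm (Omega_ff L h) phi Dphi)) ->
    grad_norm (Omega_eps L h H eps Ys) DU ^+ 2
      <= C * eps `^ (5 / 2) * L2norm (Omega_eps L h H eps Ys) P
         + C * eps `^ (3 / 2) *
           (grad_norm (Omega_pm L H eps Ys) DU + H1v_norm (Omega_ff L h) U DU).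
Proof.
exists (`|C1| + 2 * `|C2|).
move=> L h H eps Ys N M L0 h0 H0 /andP[e0 e1] _ _ cY _ _ U DU P HV LP Hdiv Hii.
set E := Omega_eps L h H eps Ys.
set F := Omega_ff L h.
set S := Sigma L.
set Pm := Omega_pm L H eps Ys.
have mF : measurable F := ff_meas L h.
have mS : measurable S := sigma_meas L.
have mPm : measurable Pm := pm_meas L H eps cY.
have mFS : measurable (F `|` S) by exact: measurableU.
have mE : measurable E by exact: measurableU.
have FE : F `<=` E by move=> x Fx; left; left.
have FSE : F `|` S `<=` E by move=> x Fx; left.
have [HU _] := HV.
have LDU : forall i j, L2 E (DU i j) by move=> i j; case: (HU i).
have LU : forall i, L2 E (U i) by move=> i; case: (HU i).
have IG : Int E (G4 DU) := G4int mE LDU.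
have Ldiv : L2 E (divg DU) by apply: L2add.
have hII := Hii U DU HV.
set a := rint E (gradprod DU DU) in hII.
set b := rint E (fun x => P x * divg DU x) in hII.
set gE := grad_norm E DU in hII *.
set hF := H1v_norm F U DU in hII *.
set gPm := grad_norm Pm DU.
set e3 := eps `^ (3 / 2) in hII *.
set e5 := eps `^ (5 / 2) in Hdiv *.
have e30 : 0 <= e3 by apply: powR_ge0.
have e50 : 0 <= e5 by apply: powR_ge0.
have gE0 : 0 <= gE by apply: sqrtr_ge0.
have hF0 : 0 <= hF by apply: sqrtr_ge0.
have gPm0 : 0 <= gPm by apply: sqrtr_ge0.
have nP0 : 0 <= L2norm E P by apply: sqrtr_ge0.
have nd0 : 0 <= L2norm E (divg DU) by apply: sqrtr_ge0.
have ggE : forall D, grad_norm D DU = Num.sqrt (rint D (G4 DU)).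
  by move=> D; rewrite /grad_norm !rintE; congr Num.sqrt; apply: eq_Rintegral => x _; rewrite Gsum.
have aE : gE ^+ 2 = a.
  rewrite /gE ggE sqr_sqrtr; last by apply: Rintegral_ge0 => x _; rewrite /G4; 
    rewrite !addr_ge0 ?sqr_ge0.
  rewrite /a !rintE; apply: eq_Rintegral => x _.
  rewrite -[LHS]/(G4 DU x) -Gsum; apply: eq_bigr => i _; apply: eq_bigr => j _; by rewrite expr2.
have hb : `|b| <= L2norm E P * (C1 * e5).
  apply: (le_trans (CS mE LP Ldiv)).
  exact: ler_wpM2l.
have IGF : Int F (G4 DU) by apply: integrableS IG.
have IGFS : Int (F `|` S) (G4 DU) by apply: integrableS IG.
have IGS : Int S (G4 DU) by apply: integrableS IG => // x Sx; left; right.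
have rsplit : rint E (G4 DU) = rint F (G4 DU) + rint Pm (G4 DU).
  rewrite !rintE /E /Omega_eps Rintegral_setU //; last first.
    apply/disj_set2P; apply/seteqP; split => // x [[[_ /andP[x1 _]]|[_ x2]] [_ [/andP[_ x3] _]]].
      by move: (lt_trans x1 x3); rewrite ltxx.
    by move: x3; rewrite x2 ltxx.
  rewrite Rintegral_setU //; last first.
    apply/disj_set2P; apply/seteqP; split => // x [[_ /andP[x1 _]] [_ x2]].
    by move: x1; rewrite x2 ltxx.
  have -> : Rintegral (@mu R) S (G4 DU) = 0.
    rewrite /Rintegral null_set_integral //.
      by case/integrableP: IGS.
    exact: sigma_null.
  by rewrite addr0.
have rF0 : 0 <= rint F (G4 DU) by apply: Rintegral_ge0 => x _; rewrite /G4 !addr_ge0 ?sqr_ge0.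
have rPm0 : 0 <= rint Pm (G4 DU) by apply: Rintegral_ge0 => x _; rewrite /G4 !addr_ge0 ?sqr_ge0.
have gFh : Num.sqrt (rint F (G4 DU)) <= hF.
  rewrite /hF /H1v_norm ler_sqrt; last first.
    by apply: Rintegral_ge0 => x _; rewrite Usum Gsum /G4 !addr_ge0 ?sqr_ge0.
  rewrite !rintE; apply: le_Rintegral => //.
    apply: (@eq_integrable _ _ _ (@mu R) F mF (EFin \o (fun x => (U ord0 x ^+ 2 + U i1 x ^+ 2) + G4 DU x))).
      by move=> x _ /=; rewrite Usum Gsum.
    apply: IntD => //.
    by apply: integrableS (IntD mE (L2sq (LU ord0)) (L2sq (LU i1))).
  move=> x _; rewrite Gsum lerDr.
  by apply: sumr_ge0 => i _; exact: sqr_ge0.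
have gsplit : gE <= gPm + hF.
  rewrite /gE /gPm !ggE rsplit.
  apply: (le_trans (sqrtD rF0 rPm0)); lra.
have h1 : a - b <= C2 * e3 * (gE + hF) by apply: le_trans (ler_norm _) hII.
have h2 : C2 * e3 * (gE + hF) <= `|C2| * e3 * (gPm + hF + hF).
  rewrite -!mulrA; apply: (@le_trans _ _ (`|C2| * (e3 * (gE + hF)))).
    by apply: ler_wpM2r; rewrite ?mulr_ge0 ?addr_ge0 // ler_norm.
  apply: ler_wpM2l => //; apply: ler_wpM2l => //; lra.
have h3 : L2norm E P * (C1 * e5) <= `|C1| * e5 * L2norm E P.
  have := ler_norm C1; have := mulr_ge0 e50 nP0; nra.
have b1 := le_trans (ler_norm b) hb.
have k1 : 0 <= `|C1| * e5 * L2norm E P by rewrite !mulr_ge0.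
have k2 : 0 <= `|C2| * e3 * (gPm + hF) by rewrite !mulr_ge0 ?addr_ge0.
have k3 : 0 <= `|C2| * e3 * hF by rewrite !mulr_ge0.
have k4 : `|C2| * e3 * (gPm + hF + hF) = `|C2| * e3 * (gPm + hF) + `|C2| * e3 * hF by ring.
have k5 : `|C2| * e3 * hF <= `|C2| * e3 * (gPm + hF) by apply: ler_wpM2l; rewrite ?mulr_ge0 //; lra.
have k6 : 0 <= 2 * `|C2| * e5 * L2norm E P by rewrite !mulr_ge0.
have k7 : 0 <= `|C1| * e3 * (gPm + hF) by rewrite !mulr_ge0 ?addr_ge0.
have -> : (`|C1| + 2 * `|C2|) * e5 * L2norm E P + (`|C1| + 2 * `|C2|) * e3 * (gPm + hF)
  = `|C1| * e5 * L2norm E P + 2 * `|C2| * e5 * L2norm E P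
    + (`|C1| * e3 * (gPm + hF) + 2 * (`|C2| * e3 * (gPm + hF))) by ring.
rewrite aE; lra.
Qed.
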